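(* Let $n \ge 2$ and let $\lambda = (n-1, n-2, \ldots, 2, 1)$. Then the moment variety $\mathcal{M}_{n,\lambda}$ is the projective toric variety of the Birkhoff polytope $B_n$. Under the identification of the coordinate $m_{i_1 i_2 \cdots i_n}$ (where $(i_1,\ldots,i_n)$ is a permutation of $\{0,1,\ldots,n-1\}$) with the $n\times n$ permutation matrix having a $1$ in position $(k, i_k+1)$ for each $k$, this variety lives in $\mathbb{P}^{n!-1}$, and it has dimension $(n-1)^2$.
   Context: Work over $\mathbb{C}$. For a partition $\lambda$ of $d$ with at most $n$ parts, let $N_\lambda$ be the set of vectors $(i_1,\ldots,i_n) \in \mathbb{Z}_{\ge 0}^n$ whose multiset of nonzero entries equals $\lambda$. The moment variety $\mathcal{M}_{n,\lambda} \subset \mathbb{P}^{|N_\lambda|-1}$, with coordinates $m_{i_1\cdots i_n}$ for $(i_1,\ldots,i_n)\in N_\lambda$, is the Zariski closure of the image of the monomial map $$(\mu_{ki})_{k\in[n],\, i\in[d]} \mapsto \bigl(\mu_{1 i_1}\mu_{2 i_2}\cdots \mu_{n i_n}\bigr)_{(i_1,\ldots,i_n)\in N_\lambda},$$ with the convention $\mu_{k0}=1$. The Birkhoff polytope $B_n$ is the convex hull of the $n!$ permutation matrices of size $n\times n$. The toric variety of $B_n$ is the Zariski closure of the image of the monomial map $t=(t_{ab}) \mapsto (t^{P})_{P}$, where $P$ ranges over the permutation matrices and $t^P=\prod_{a,b} t_{ab}^{P_{ab}}$. *)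

(* Defs.v *)
From HB Require Import structures.
From mathcomp Require Import all_boot all_algebra all_fingroup.
From mathcomp Require Import mpoly.

Set Implicit Arguments.
Unset Strict Implicit.
Unset Printing Implicit Defensive.
Import GRing.Theory.
Local Open Scope ring_scope.

(* Points of the affine space C^T are functions T -> C; polynomials in the
   coordinates are mpolys in #|T| variables, variable i standing for the
   coordinate (enum_val i). *)

Definition vanish (C : fieldType) (T : finType) (p : {mpoly C[#|T|]}) (x : T -> C) : Prop :=
  p.@[fun i => x (enum_val i)] = 0.

Definition zariski_closure (C : fieldType) (T : finType) (S : (T -> C) -> Prop) :
  (T -> C) -> Prop :=
  fun x => forall p : {mpoly C[#|T|]}, (forall y, S y -> vanish p y) -> vanish p x.

Definition image_of (C : fieldType) (T : finType) (P : Type) (f : P -> T -> C) :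
  (T -> C) -> Prop :=
  fun x => exists p : P, forall i, x i = f p i.

Definition alg_indep_coords (C : fieldType) (T : finType) (X : (T -> C) -> Prop)
  (k : nat) (s : 'I_k -> T) : Prop :=
  forall q : {mpoly C[k]}, (forall x, X x -> q.@[fun j => x (s j)] = 0) -> q = 0.

(* Dimension of an affine variety X in C^T: the maximal number of
   algebraically independent coordinate functions on X
   (= transcendence degree of the coordinate ring = Krull dimension). *)
Definition affine_dim (C : fieldType) (T : finType) (X : (T -> C) -> Prop) (d : nat) : Prop :=
  (exists s : 'I_d -> T, alg_indep_coords X s) /\
  (forall k (s : 'I_k -> T), alg_indep_coords X s -> (k <= d)%N).

(* Dimension of the projective variety whose affine cone is X. *)
Definition proj_dim (C : fieldType) (T : finType) (X : (T -> C) -> Prop) (d : nat) : Prop :=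
  affine_dim X d.+1.

(* N_lambda : vectors (i_1..i_n) of naturals whose multiset of nonzero entries
   is lambda; entries are then bounded by d = |lambda|, so we take them in
   'I_(d+1). *)
Definition Nlam (n : nat) (lam : seq nat) : pred {ffun 'I_n -> 'I_(sumn lam).+1} :=
  fun v => perm_eq [seq (val (v k)) | k <- enum 'I_n & (val (v k) != 0%N)] lam.

Definition Ncoord (n : nat) (lam : seq nat) : finType :=
  {v : {ffun 'I_n -> 'I_(sumn lam).+1} | @Nlam n lam v}.

Definition Nentry (n : nat) (lam : seq nat) (v : Ncoord n lam) (k : 'I_n) : nat :=
  val (val v k).

(* The monomial parametrization; mu k i is mu_{k i} (only i in [d] is used),
   with the convention mu_{k 0} = 1. *)
Definition moment_param (C : fieldType) (n : nat) (lam : seq nat)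
  (mu : 'I_n -> nat -> C) : Ncoord n lam -> C :=
  fun v => \prod_(k < n) (if Nentry v k == 0%N then 1 else mu k (Nentry v k)).

(* Affine cone of M_{n,lambda} in C^{N_lambda}. *)
Definition moment_variety (C : fieldType) (n : nat) (lam : seq nat) :
  (Ncoord n lam -> C) -> Prop :=
  zariski_closure (image_of (@moment_param C n lam)).

(* Coordinates are indexed by permutation matrices, i.e. by sigma : 'S_n, the
   matrix P_sigma having entry (a,b) equal to (sigma a == b). *)
Definition birkhoff_param (C : fieldType) (n : nat) (t : 'I_n -> 'I_n -> C) :
  'S_n -> C :=
  fun s => \prod_(a < n) \prod_(b < n) t a b ^+ (s a == b).

(* Affine cone of the toric variety of B_n in C^{S_n}. *)
Definition birkhoff_toric (C : fieldType) (n : nat) : ('S_n -> C) -> Prop :=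
  zariski_closure (image_of (@birkhoff_param C n)).

Definition staircase (n : nat) : seq nat := rev (iota 1 n.-1).

(* Main.v *)
From HB Require Import structures.
Require Import Defs.
From mathcomp Require Import all_boot all_algebra all_fingroup.
From mathcomp Require Import mpoly.

Module MPA.
Set Implicit Arguments.
Unset Strict Implicit.
Unset Printing Implicit Defensive.
Import GRing.Theory.

Lemma count_card (T : finType) (P : pred T) : count P (enum T) = #|P|.
Proof. by rewrite cardE -size_filter /enum_mem -enumT /= filter_predT. Qed.
Lemma two_out (T : finType) (P : pred T) k1 k2 : k1 != k2 -> ~~ P k1 -> ~~ P k2 ->
  (#|P| + 2 <= #|T|)%N.
Proof.
move=> ne p1 p2; rewrite -(cardC P) leq_add2l.
have -> : 2 = #|pred2 k1 k2| by rewrite card2 ne.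
apply: subset_leq_card; apply/subsetP => x; rewrite !inE => /orP[]/eqP->; by rewrite ?p1 ?p2.
Qed.

Section PartA.
Variable m : nat.
Local Notation N := m.+2.
Local Notation lam := (staircase N).
Local Notation NC := (Ncoord N lam).

Lemma sumn_lam : m.+1 <= sumn lam.
Proof.
rewrite /staircase sumn_rev -addn1 iotaD sumn_cat /= add1n addn0.
by rewrite addn1 leq_addl.
Qed.

Lemma le_sum : N <= (sumn lam).+1.
Proof. by rewrite ltnS sumn_lam. Qed.

Lemma mem_lam x : (x \in lam) = (0 < x < N)%N.
Proof. by rewrite /staircase mem_rev mem_iota add1n. Qed.

Lemma uniq_lam : uniq lam.
Proof. by rewrite /staircase rev_uniq iota_uniq. Qed.

Definition ffofperm (s : 'S_N) : {ffun 'I_N -> 'I_(sumn lam).+1} :=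
  [ffun k => widen_ord le_sum (s k)].

Lemma Nlam_perm (s : 'S_N) : Nlam (ffofperm s).
Proof.
rewrite /Nlam; apply: uniq_perm.
- rewrite map_inj_in_uniq; first by apply: filter_uniq; apply: enum_uniq.
  move=> k1 k2 _ _; rewrite !ffunE /= => /val_inj/perm_inj; done.
- exact: uniq_lam.
move=> x; rewrite mem_lam; apply/mapP/idP.
  case=> k; rewrite mem_filter ffunE /= => /andP[nz _] ->.
  by rewrite lt0n nz ltn_ord.
case/andP=> x0 xN; exists (s^-1 (Ordinal xN))%g.
  by rewrite mem_filter mem_enum ffunE /= permKV /= -lt0n x0.
by rewrite ffunE /= permKV.
Qed.

Definition vofperm (s : 'S_N) : NC := exist _ (ffofperm s) (Nlam_perm s).

Lemma vofpermE s k : Nentry (vofperm s) k = s k.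
Proof. by rewrite /Nentry /= ffunE. Qed.

Lemma uniq_map_inj (T1 T2 : eqType) (f : T1 -> T2) (s : seq T1) :
  uniq (map f s) -> {in s &, injective f}.
Proof.
elim: s => //= x s IH /andP[nfx us] y1 y2.
rewrite !in_cons => /orP[/eqP->|h1] /orP[/eqP->|h2] //.
- by move=> e; move: nfx; rewrite e map_f.
- by move=> e; move: nfx; rewrite -e map_f.
- exact: IH.
Qed.

Lemma Nentry_mem (v : NC) k : Nentry v k != 0%N -> Nentry v k \in lam.
Proof.
move=> nz; rewrite -(perm_mem (valP v)); apply/mapP; exists k => //.
by rewrite mem_filter mem_enum andbT.
Qed.

Lemma Nentry_lt (v : NC) k : (Nentry v k < N)%N.
Proof.
case: (Nentry v k =P 0%N) => [->//|/eqP nz].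
by move: (Nentry_mem nz); rewrite mem_lam => /andP[].
Qed.

Definition gv (v : NC) (k : 'I_N) : 'I_N := Ordinal (Nentry_lt v k).

Lemma gv_inj v : injective (gv v).
Proof.
move=> k1 k2 /(congr1 val) /= e.
case: (Nentry v k1 =P 0%N) => [z1|/eqP nz1]; last first.
  have U : uniq [seq (val (val v k)) | k <- enum 'I_N & (val (val v k) != 0%N)].
    by rewrite (perm_uniq (valP v)) uniq_lam.
  apply: (uniq_map_inj U) => //; rewrite mem_filter mem_enum andbT //.
  by rewrite /Nentry in e nz1; rewrite -e.
apply/eqP; apply/negP => /negP ne.
have Hsz : size [seq (val (val v k)) | k <- enum 'I_N & (val (val v k) != 0%N)] = m.+1.
  by rewrite (perm_size (valP v)) /staircase size_rev size_iota.
move: Hsz; rewrite size_map size_filter count_card => Hc.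
have := two_out (P := fun k => val (val v k) != 0%N) ne.
rewrite /Nentry in z1 e; rewrite Hc card_ord z1 -e z1 eqxx => /(_ isT isT).
by rewrite addn2 ltnn.
Qed.

Definition permof (v : NC) : 'S_N := perm (@gv_inj v).

Lemma permofE v k : val (permof v k) = Nentry v k.
Proof. by rewrite permE. Qed.

Lemma permofK : cancel vofperm permof.
Proof. by move=> s; apply/permP => k; apply/val_inj; rewrite permofE vofpermE. Qed.

Lemma vofpermK : cancel permof vofperm.
Proof.
move=> v; apply/val_inj/ffunP => k; apply/val_inj.
by rewrite /= ffunE /= permofE.
Qed.

Lemma card_NC : #|NC| = N`!.
Proof.
rewrite -card_Sn; apply: (@bij_eq_card _ _ permof).
by exists vofperm; [exact: vofpermK | exact: permofK].
Qed.

End PartA.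

End MPA.
Import MPA.

Module MPZ.
Set Implicit Arguments.
Unset Strict Implicit.
Unset Printing Implicit Defensive.
Import GRing.Theory.
Local Open Scope ring_scope.

Section LemmaZ.
Variable C : fieldType.
Hypothesis hC : [pchar C] =i pred0.

Lemma natr_inj_C : injective (fun i : nat => i%:R : C).
Proof.
move=> i j /= e.
wlog le : i j e / (j <= i)%N.
  by move=> W; case: (leqP j i) => h; [apply: W | apply/esym/W => //; apply: ltnW].
apply/eqP; rewrite eqn_leq le andbT -subn_eq0.
by rewrite -(pcharf0P C).1 // natrB // e subrr.
Qed.

Lemma poly_allroots (p : {poly C}) : (forall x, p.[x] = 0) -> p = 0.
Proof.
move=> h; apply/eqP; apply/negP => /negP nz.
have H1 : all (root p) [seq i%:R | i <- iota 0 (size p)].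
  by apply/allP => x /mapP[i _ ->]; apply/rootP; apply: h.
have H2 : uniq [seq i%:R : C | i <- iota 0 (size p)].
  by rewrite map_inj_uniq ?iota_uniq //; apply: natr_inj_C.
by have := max_poly_roots nz H1 H2; rewrite size_map size_iota ltnn.
Qed.

Section Step.
Variable k : nat.

Definition mdrop (m : 'X_{1..k.+1}) : 'X_{1..k} := [multinom m (widen_ord (leqnSn k) i) | i < k].

Lemma mdrop_inj (m1 m2 : 'X_{1..k.+1}) : m1 ord_max = m2 ord_max -> mdrop m1 = mdrop m2 -> m1 = m2.
Proof.
move=> e1 /mnmP e2; apply/mnmP => i; case: (unliftP ord_max i) => [j ->|->] //.
have -> : lift ord_max j = widen_ord (leqnSn k) j by apply/val_inj; exact: lift_max.
by have := e2 j; rewrite !mnmE.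
Qed.

Definition cj (q : {mpoly C[k.+1]}) (j : nat) : {mpoly C[k]} :=
  \sum_(m <- msupp q | m ord_max == j) q@_m *: 'X_[mdrop m].

Lemma cj_coef q (m : 'X_{1..k.+1}) : m \in msupp q -> (cj q (m ord_max))@_(mdrop m) = q@_m.
Proof.
move=> hm; rewrite /cj raddf_sum /=.
rewrite (big_rem m) //= eqxx mcoeffZ mcoeffX eqxx mulr1 big1_seq ?addr0 //.
move=> m2 /andP[/eqP e2 hm2]; rewrite mcoeffZ mcoeffX.
case: eqP => [e3|_]; last by rewrite mulr0.
have em : m2 = m by apply: mdrop_inj.
move: hm2; rewrite em => hm2.
by move: hm2; rewrite (mem_rem_uniq _ (msupp_uniq q)) !inE eqxx.
Qed.

Definition ext (v : 'I_k -> C) (x : C) (i : 'I_k.+1) : C :=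
  if unlift ord_max i is Some j then v j else x.

Lemma cj_eval q v j : (cj q j).@[v] =
  \sum_(m <- msupp q | m ord_max == j) q@_m * \prod_(i < k) v i ^+ m (widen_ord (leqnSn k) i).
Proof.
rewrite /cj rmorph_sum /=; apply: eq_bigr => m _.
by rewrite mevalZ mevalX; congr (_ * _); apply: eq_bigr => i _; rewrite mnmE.
Qed.

Lemma ext_eval q v x (D : nat) :
  (forall m, m \in msupp q -> (m ord_max < D)%N) ->
  q.@[ext v x] = (\poly_(j < D) (cj q j).@[v]).[x].
Proof.
move=> hD; rewrite horner_poly mevalE.
under [RHS]eq_bigr => j _ do rewrite cj_eval big_distrl /=.
rewrite (exchange_big_dep xpredT) //=.
apply: eq_big_seq => m hm.
rewrite [RHS](bigD1 (Ordinal (hD m hm))) //= [X in _ + X]big1 ?addr0; last first.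
  by move=> j /andP[/eqP e ne]; move: ne; rewrite -val_eqE /= e eqxx.
rewrite big_ord_recr /= -mulrA; congr (_ * (_ * _)).
  apply: eq_bigr => i _; rewrite /ext.
  have -> : widen_ord (leqnSn k) i = lift ord_max i by apply/val_inj; exact: (esym (lift_max i)).
  by rewrite liftK.
by rewrite /ext unlift_none.
Qed.

End Step.

Lemma lemmaZ k (q : {mpoly C[k]}) : (forall v, q.@[v] = 0) -> q = 0.
Proof.
elim: k q => [|k IH] q h.
  have := h (fun i => 0); rewrite {1}(nvar0_mpolyC q) mevalC => e.
  by rewrite (nvar0_mpolyC q) e.
set D := (\max_(m <- msupp q) (m ord_max).+1)%N.
have hD : forall m, m \in msupp q -> (m ord_max < D)%N.
  by move=> m hm; apply: (@leq_bigmax_seq _ _ xpredT (fun m : 'X_{1..k.+1} => (m ord_max).+1)).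
have hc : forall j, (j < D)%N -> cj q j = 0.
  move=> j jD; apply: IH => v.
  have U : \poly_(j < D) (cj q j).@[v] = 0.
    by apply: poly_allroots => x; rewrite -ext_eval // h.
  by have := congr1 (fun p : {poly C} => p`_j) U; rewrite /= coef_poly jD coef0.
apply/mpolyP => m; rewrite mcoeff0.
case: (boolP (m \in msupp q)) => hm; last by apply/eqP; rewrite mcoeff_eq0.
by rewrite -cj_coef // hc ?mcoeff0 // hD.
Qed.

Lemma lemmaZ' k (q : {mpoly C[k]}) :
  (forall v, (forall i, v i != 0) -> q.@[v] = 0) -> q = 0.
Proof.
move=> h.
have : q * \prod_(i < k) 'X_i = 0.
  apply: lemmaZ => v; rewrite mevalM rmorph_prod /=.
  case: (boolP [forall i, v i != 0]) => [/forallP a|].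
    by rewrite h // mul0r.
  rewrite negb_forall => /existsP[i]; rewrite negbK => /eqP vi.
  by rewrite (bigD1 i) //= mevalXU vi mul0r mulr0.
move/eqP; rewrite mulf_eq0 => /orP[/eqP//|].
rewrite prodf_seq_eq0 => /hasP[i _ /andP[_ /eqP]] /(congr1 (mcoeff U_(i)%MM)).
by rewrite mcoeffX mcoeff0 eqxx => /eqP; rewrite oner_eq0.
Qed.

End LemmaZ.

End MPZ.
Import MPZ.

Module MPB.
Set Implicit Arguments.
Unset Strict Implicit.
Unset Printing Implicit Defensive.
Import GRing.Theory.
Local Open Scope ring_scope.

Section Gen.
Variable C : fieldType.

Lemma closure_sub (T : finType) (S : (T -> C) -> Prop) x : S x -> zariski_closure S x.
Proof. by move=> Sx p h; apply: h. Qed.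

Definition tr (T1 T2 : finType) (phi : T2 -> T1) (p : {mpoly C[#|T2|]}) : {mpoly C[#|T1|]} :=
  p \mPo [tuple ('X_(enum_rank (phi (enum_val i))) : {mpoly C[#|T1|]}) | i < #|T2|].

Lemma tr_eval (T1 T2 : finType) (phi : T2 -> T1) p (x : T1 -> C) :
  (tr phi p).@[fun i => x (enum_val i)] = p.@[fun i => x (phi (enum_val i))].
Proof.
rewrite comp_mpoly_meval; apply: meval_eq => i.
by rewrite tnth_mktuple mevalXU enum_rankK.
Qed.
End Gen.

Section PartB.
Variable C : closedFieldType.
Hypothesis hC : [pchar C] =i pred0.
Variable m : nat.
Local Notation N := m.+2.
Local Notation lam := (staircase N).
Local Notation NC := (Ncoord N lam).

Lemma birkE (t : 'I_N -> 'I_N -> C) (s : 'S_N) : birkhoff_param t s = \prod_a t a (s a).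
Proof.
rewrite /birkhoff_param; apply: eq_bigr => a _.
rewrite (bigD1 (s a)) //= eqxx expr1 big1 ?mulr1 // => b nb.
by rewrite eq_sym (negbTE nb) expr0.
Qed.

Lemma momentE (mu : 'I_N -> nat -> C) s : moment_param mu (vofperm s) =
  \prod_a (if val (s a) == 0%N then 1 else mu a (val (s a))).
Proof. by apply: eq_bigr => a _; rewrite vofpermE. Qed.

Lemma dir1 (x : NC -> C) (y : 'S_N -> C) : (forall s, y s = x (vofperm s)) ->
  moment_variety x -> birkhoff_toric y.
Proof.
move=> hxy hx p hp; rewrite /vanish.
rewrite (meval_eq p (v2 := fun i => x (vofperm (enum_val i)))); last by move=> i; rewrite hxy.
rewrite -(tr_eval (@vofperm m)); apply: hx => z [mu hz]; rewrite /vanish tr_eval.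
apply: (hp (fun s => z (vofperm s))).
exists (fun a (b : 'I_N) => if val b == 0%N then 1 else mu a (val b)) => s.
by rewrite hz momentE birkE.
Qed.

Lemma mom_of_birk (t : 'I_N -> 'I_N -> C) : (forall a b, t a b != 0) ->
  exists mu, forall v, moment_param mu v = birkhoff_param t (permof v).
Proof.
move=> tnz; pose c := \prod_a t a ord0.
have [g hg] : exists g, g ^+ m.+1 = c.
  have : size (('X^(m.+1) : {poly C}) - c%:P) != 1%N by rewrite size_XnsubC.
  case/closed_rootP => g /rootP; rewrite !hornerE => /eqP; rewrite subr_eq0 => /eqP hg.
  by exists g.
exists (fun a i => g * (t a (inord i) / t a ord0)) => v.
rewrite -{1}(vofpermK v); set s := permof v; rewrite momentE birkE.
pose a0 := (s^-1 ord0)%g.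
rewrite (bigD1 a0) // [RHS](bigD1 a0) //= permKV eqxx.
have E : \prod_(a | a != a0) (if val (s a) == 0%N then 1 else g * (t a (inord (val (s a))) / t a ord0))
   = \prod_(a | a != a0) (g * (t a (s a) / t a ord0)).
  apply: eq_bigr => a ha; rewrite ifF ?inord_val //.
  apply/negbTE; apply: contra ha => /eqP h0.
  have e : s a = ord0 by apply/val_inj.
  by rewrite /a0 -e permK.
rewrite E big_split /= prodr_const prodf_div.
have -> : #|[pred a | a != a0]| = m.+1 by rewrite cardC1 card_ord.
rewrite hg /c (bigD1 a0) //=.
set B := \prod_(a | a != a0) t a ord0.
have Bnz : B != 0 by apply/prodf_neq0 => a _; apply: tnz.
by rewrite mul1r -mulrA [B * _]mulrC divfK.
Qed.

Definition Bm (s : 'S_N) : {mpoly C[#|{: 'I_N * 'I_N}|]} :=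
  \prod_a 'X_(enum_rank (a, s a)).

Lemma Bm_eval s w : (Bm s).@[w] = \prod_a w (enum_rank (a, s a)).
Proof. by rewrite /Bm rmorph_prod /=; apply: eq_bigr => a _; rewrite mevalXU. Qed.

Lemma dense (p : {mpoly C[#|NC|]}) :
  (forall z, image_of (@moment_param C N lam) z -> vanish p z) ->
  forall t, vanish p (fun v => birkhoff_param t (permof v)).
Proof.
move=> hp.
pose P := p \mPo [tuple Bm (permof (enum_val i)) | i < #|NC|].
have PE w : P.@[w] = p.@[fun i => \prod_a w (enum_rank (a, permof (enum_val i) a))].
  rewrite comp_mpoly_meval; apply: meval_eq => i; by rewrite tnth_mktuple Bm_eval.
have P0 : P = 0.
  apply: (lemmaZ' hC) => w wnz.
  pose t a b := w (enum_rank (a, b)).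
  have [mu hmu] : exists mu, forall v, moment_param mu v = birkhoff_param t (permof v).
    by apply: mom_of_birk => a b; apply: wnz.
  rewrite PE; have := hp (moment_param mu) (ex_intro _ mu (fun i => erefl)).
  rewrite /vanish => <-; apply: meval_eq => i; rewrite hmu birkE.
  done.
move=> t; have := PE (fun j => t (enum_val j).1 (enum_val j).2).
rewrite P0 meval0 /vanish => /esym <-; apply: meval_eq => i.
by rewrite birkE; apply: eq_bigr => a _; rewrite enum_rankK.
Qed.

Lemma dir2 (x : NC -> C) (y : 'S_N -> C) : (forall v, x v = y (permof v)) ->
  birkhoff_toric y -> moment_variety x.
Proof.
move=> hxy hy p hp; rewrite /vanish.
rewrite (meval_eq p (v2 := fun i => y (permof (enum_val i)))); last by move=> i; rewrite hxy.
rewrite -(tr_eval (@permof m)); apply: hy => z [t hz]; rewrite /vanish tr_eval.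
have := dense hp t; rewrite /vanish => <-; apply: meval_eq => i.
by rewrite hz.
Qed.

End PartB.

End MPB.
Import MPB.

Module MPD1.
Set Implicit Arguments.
Unset Strict Implicit.
Unset Printing Implicit Defensive.
Import GRing.Theory.
Local Open Scope ring_scope.

Section PartD1.
Variable C : closedFieldType.
Hypothesis hC : [pchar C] =i pred0.
Variable m : nat.
Local Notation N := m.+2.
Local Notation K := m.+1.
Local Notation lam := (staircase N).
Local Notation NC := (Ncoord N lam).

Definition one : 'I_N := lift ord0 ord0.
Definition A0 (a : 'I_K) : 'I_N := lift ord0 a.

Definition sp (o : option ('I_K * 'I_K)) : 'S_N :=
  match o with
  | None => 1%g
  | Some (a, b) => if a == b then tperm ord0 (A0 a)
                   else (tperm (A0 a) (A0 b) * tperm ord0 (A0 a))%g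
  end.

Lemma prod_supp (M : 'I_N -> 'I_N -> C) (D : C) (s : 'S_N) (S : {set 'I_N}) :
  ord0 \in S -> (forall x, x \notin S -> s x = x) ->
  (forall x, x != ord0 -> M x x = if x == one then D else 1) ->
  \prod_x M x (s x) = (\prod_(x in S) M x (s x)) * (if one \in S then 1 else D).
Proof.
move=> S0 hs hM; rewrite (bigID (mem S)) /=; congr (_ * _).
rewrite (eq_bigr (fun x => if x == one then D else 1)); last first.
  move=> x xS; rewrite hs // hM //; by apply: contraNneq xS => ->.
case: ifP => o1.
  by apply: big1 => x xS; case: eqP => // e; move: xS; rewrite e o1.
rewrite (bigD1 one) ?o1 //= big1 ?mulr1 // => x /andP[_ /negbTE ->] //.
Qed.

Variable Y : option ('I_K * 'I_K) -> C.
Hypothesis Ynz : forall o, Y o != 0.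

Definition Dv := Y None.
Definition al (a : 'I_K) := Y (Some (a, a)) / (if a == ord0 then 1 else Dv).
Definition be (a b : 'I_K) :=
  Y (Some (a, b)) / (al a * (if (a == ord0) || (b == ord0) then 1 else Dv)).
Definition pr (z : 'I_N) : 'I_K := inord (val z).-1.
Definition Mm (x y : 'I_N) : C :=
  if val y == 0%N then 1 else if val x == 0%N then al (pr y)
  else if x == y then (if x == one then Dv else 1) else be (pr x) (pr y).
Definition mu0 (x : 'I_N) (i : nat) : C := Mm x (inord i).

Lemma prA0 a : pr (A0 a) = a.
Proof. by apply/val_inj; rewrite /pr /= inordK add0n. Qed.

Lemma A0_neq0 a : (A0 a == ord0) = false.
Proof. by rewrite -val_eqE. Qed.

Lemma A0n0 a : A0 a != ord0. Proof. by rewrite A0_neq0. Qed.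

Lemma A0_one a : (one == A0 a) = (a == ord0).
Proof. by rewrite /one /A0 (inj_eq (@lift_inj _ ord0)) eq_sym. Qed.

Lemma mom_sp s : moment_param mu0 (vofperm s) = \prod_x Mm x (s x).
Proof.
rewrite momentE; apply: eq_bigr => x _.
rewrite /mu0 inord_val; rewrite /Mm; by case: eqP.
Qed.

Lemma Mdiag x : x != ord0 -> Mm x x = if x == one then Dv else 1.
Proof. by move=> x0; rewrite /Mm eqxx; have -> : (val x == 0%N) = false by apply/negbTE. Qed.

Lemma Dv_nz : Dv != 0. Proof. exact: Ynz. Qed.

Lemma al_nz a : al a != 0.
Proof. rewrite /al mulf_neq0 ?invr_eq0 ?Ynz //; case: ifP => _; [exact: oner_neq0|exact: Dv_nz]. Qed.

Lemma one_neq0 : (one == ord0) = false.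
Proof. by rewrite -val_eqE. Qed.

Lemma sp_val o : moment_param mu0 (vofperm (sp o)) = Y o.
Proof.
rewrite mom_sp.
have hM : forall x, x != ord0 -> Mm x x = if x == one then Dv else 1 by move=> x; apply: Mdiag.
case: o => [[a b]|] /=; last first.
  have S0 : ord0 \in [set ord0 : 'I_N] by rewrite inE.
  rewrite (@prod_supp Mm Dv 1 [set ord0] S0) //; last by move=> x _; rewrite perm1.
  by rewrite big_set1 perm1 /Mm /= mul1r inE one_neq0.
case: eqP => [<-|/eqP ab].
  have S0 : ord0 \in [set ord0; A0 a] by rewrite !inE eqxx.
  rewrite (@prod_supp Mm Dv _ [set ord0; A0 a] S0) //; last first.
    by move=> x; rewrite !inE negb_or => /andP[x0 xa]; rewrite tpermD // eq_sym.
  rewrite big_setU1 ?inE ?A0_neq0 //= big_set1 tpermL tpermR.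
  rewrite /Mm /= prA0 mulr1 A0_one /al.
  by case: (a == ord0); [rewrite divr1 mulr1 | rewrite divfK ?Dv_nz].
have AB : A0 a != A0 b by rewrite (inj_eq (@lift_inj _ ord0)).
have S0 : ord0 \in [set ord0; A0 a; A0 b] by rewrite !inE eqxx.
rewrite (@prod_supp Mm Dv _ [set ord0; A0 a; A0 b] S0) //; last first.
  move=> x; rewrite !inE !negb_or => /andP[/andP[x0 xa] xb].
  have h1 : tperm (A0 a) (A0 b) x = x by rewrite tpermD // eq_sym.
  by rewrite permM h1 tpermD // eq_sym.
have e0 : (tperm (A0 a) (A0 b) * tperm ord0 (A0 a))%g ord0 = A0 a.
  have h : tperm (A0 a) (A0 b) ord0 = ord0 by apply: tpermD; apply: A0n0.
  by rewrite permM h tpermL.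
have ea : (tperm (A0 a) (A0 b) * tperm ord0 (A0 a))%g (A0 a) = A0 b.
  by rewrite permM tpermL tpermD // ?A0n0 // eq_sym.
have eb : (tperm (A0 a) (A0 b) * tperm ord0 (A0 a))%g (A0 b) = ord0.
  by rewrite permM tpermR tpermR.
rewrite -setUA big_setU1; last by rewrite !inE !negb_or !(eq_sym ord0) !A0n0.
rewrite big_setU1; last by rewrite !inE.
rewrite big_set1 e0 ea eb /Mm /= (negbTE AB) !prA0 mulr1 !inE one_neq0 !A0_one /=.
rewrite /be; set e := (if _ then _ else _).
have enz : e != 0 by rewrite /e; case: ifP => _; [exact: oner_neq0 | exact: Dv_nz].
by rewrite mulrAC mulrC divfK // mulf_neq0 // al_nz.
Qed.
End PartD1.

Section PartD1b.
Variable C : closedFieldType.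
Hypothesis hC : [pchar C] =i pred0.
Variable m : nat.
Local Notation N := m.+2.
Local Notation K := m.+1.
Local Notation lam := (staircase N).
Local Notation NC := (Ncoord N lam).

Lemma card_idx : #|{: option ('I_K * 'I_K)}| = (K ^ 2).+1.
Proof. by rewrite card_option card_prod card_ord mulnn. Qed.

Definition idx (j : 'I_(K ^ 2).+1) : option ('I_K * 'I_K) := enum_val (cast_ord (esym card_idx) j).
Definition idxinv (o : option ('I_K * 'I_K)) : 'I_(K ^ 2).+1 := cast_ord card_idx (enum_rank o).

Lemma idxK j : idxinv (idx j) = j.
Proof. by rewrite /idxinv /idx enum_valK cast_ordKV. Qed.

Lemma indep_exists : exists s : 'I_(K ^ 2).+1 -> NC,
  alg_indep_coords (@moment_variety C N lam) s.
Proof.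
exists (fun j => vofperm (sp (idx j))) => q hq.
apply: (lemmaZ' hC) => v vnz.
pose Y o := v (idxinv o).
have Ynz : forall o, Y o != 0 by move=> o; apply: vnz.
have := hq (moment_param (mu0 Y)) (closure_sub (ex_intro _ (mu0 Y) (fun i => erefl))).
move=> <-; apply: meval_eq => j.
by rewrite sp_val // /Y idxK.
Qed.
End PartD1b.

End MPD1.
Import MPD1.

Module MPD2.
Set Implicit Arguments.
Unset Strict Implicit.
Unset Printing Implicit Defensive.
Import GRing.Theory Num.Theory.
Local Open Scope ring_scope.

Section PartD2.
Variable m : nat.
Local Notation N := m.+2.
Local Notation K := m.+1.
Local Notation lam := (staircase N).
Local Notation NC := (Ncoord N lam).
Variable k : nat.
Variable sg : 'I_k -> 'S_N.
Hypothesis hk : ((K ^ 2).+1 < k)%N.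

Definition fvec (j : 'I_k) : 'rV[rat]_(1 + K * K) :=
  row_mx (const_mx 1) (mxvec (\matrix_(a < K, i < K) ((sg j (A0 a) == A0 i) : nat)%:R)).

Definition Amx : 'M[rat]_(k, 1 + K * K) := \matrix_(j, c) fvec j 0 c.

Lemma kernel_vec : exists u : 'rV[rat]_k, u != 0 /\ u *m Amx = 0.
Proof.
have nrf : ~~ row_free Amx.
  apply/negP => /eqP h; have := rank_leq_col Amx; rewrite h.
  by rewrite add1n mulnn leqNgt hk.
rewrite -kermx_eq0 in nrf; case/rowV0Pn: nrf => u /sub_kermxP hu unz.
by exists u.
Qed.

Variable u : 'rV[rat]_k.
Hypothesis unz : u != 0.
Hypothesis hu : u *m Amx = 0.

Definition Dq : rat := \prod_j (denq (u 0 j))%:~R.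
Definition cint (j : 'I_k) : int := numq (u 0 j) * \prod_(i | i != j) denq (u 0 i).

Lemma cintE j : (cint j)%:~R = u 0 j * Dq.
Proof.
rewrite /cint rmorphM /= rmorph_prod numqE /Dq [in RHS](bigD1 j) //=.
by rewrite mulrA.
Qed.

Lemma Dq_nz : Dq != 0.
Proof. by apply/prodf_neq0 => j _; rewrite intr_eq0 denq_neq0. Qed.

Lemma col_eq (c : 'I_(1 + K * K)) (e : 'I_k -> int) :
  (forall j, Amx j c = (e j)%:~R) -> \sum_j cint j * e j = 0.
Proof.
move=> he; apply/eqP; rewrite -(@intr_eq0 rat) rmorph_sum /=.
have := congr1 (fun M : 'rV[rat]_(1 + K * K) => M 0 c) hu; rewrite !mxE => h.
under eq_bigr => j _ do rewrite rmorphM /= cintE -he mulrAC.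
by rewrite -mulr_suml h mul0r.
Qed.

Lemma sum_c : \sum_j cint j = 0.
Proof.
rewrite -[RHS](col_eq (c := lshift _ ord0) (e := fun _ => 1)).
  by apply: eq_bigr => j _; rewrite mulr1.
by move=> j; rewrite mxE /fvec row_mxEl mxE.
Qed.

Lemma sum_lift (a i : 'I_K) : \sum_j cint j * (((sg j (A0 a) == A0 i) : nat) : int) = 0.
Proof.
apply: (col_eq (c := rshift 1 (mxvec_index a i))) => j.
by rewrite mxE /fvec row_mxEr mxvecE mxE.
Qed.

Lemma sum_ind (s : 'S_N) (i : 'I_N) : (\sum_(a < N) ((s a == i) : nat))%N = 1%N.
Proof.
rewrite (bigD1 (s^-1 i)%g) //= permKV eqxx big1 // => a ha.
by apply/eqP; rewrite eqb0; apply: contra ha => /eqP <-; rewrite permK.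
Qed.

Lemma sum_all (a i : 'I_N) : i != ord0 ->
  \sum_j cint j * (((sg j a == i) : nat) : int) = 0.
Proof.
move=> i0; case: (unliftP ord0 i) => [i' ei|ei]; last by rewrite ei eqxx in i0.
case: (unliftP ord0 a) => [a' ->|->]; first by rewrite ei; apply: sum_lift.
have E j : (((sg j ord0 == i) : nat) : int) = 1 - \sum_(a' < K) (((sg j (A0 a') == i) : nat) : int).
  have := sum_ind (sg j) i; rewrite big_ord_recl /= => /(congr1 Posz).
  rewrite PoszD (big_morph Posz PoszD erefl) => h.
  have h1 : (1 : int) = Posz 1 by [].
  by rewrite h1 -h /A0 addrK.
under eq_bigr => j _ do rewrite E mulrBr mulr1 mulr_sumr.
rewrite sumrB sum_c exchange_big /= big1 ?subrr // => a' _.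
by rewrite ei; apply: sum_lift.
Qed.

Variable C : closedFieldType.

Definition mp (j : 'I_k) : nat := if (0 <= cint j) then `|cint j|%N else 0%N.
Definition mn (j : 'I_k) : nat := if (cint j < 0) then `|cint j|%N else 0%N.

Lemma cint_split j : cint j = (mp j)%:Z - (mn j)%:Z.
Proof.
rewrite /mp /mn; case: (lerP 0 (cint j)) => h /=.
  by rewrite subr0 abszE ger0_norm.
by rewrite sub0r abszE ltr0_norm ?opprK.
Qed.

Definition mP : 'X_{1..k} := [multinom mp j | j < k].
Definition mN : 'X_{1..k} := [multinom mn j | j < k].
Definition qpoly : {mpoly C[k]} := 'X_[mP] - 'X_[mN].

Lemma q_nz : qpoly != 0.
Proof.
have [j0 uj0] : exists j0, u 0 j0 != 0.
  case: (boolP [exists j, u 0 j != 0]) => [/existsP//|].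
  rewrite negb_exists => /forallP h; move/negP: unz; case.
  by apply/eqP/rowP => j; rewrite mxE; apply/eqP; have := h j; rewrite negbK.
have c0 : cint j0 != 0 by rewrite -(@intr_eq0 rat) cintE mulf_neq0 // Dq_nz.
apply/negP; rewrite /qpoly subr_eq0 => /eqP e.
have := congr1 (mcoeff mP) e; rewrite !mcoeffX eqxx.
case: (mN =P mP) => [eN|]; last by move=> _ /eqP; rewrite oner_eq0.
move=> _; move: c0; rewrite cint_split.
have := congr1 (fun mm : 'X_{1..k} => mm j0) eN; rewrite /= !mnmE => ->.
by rewrite subrr eqxx.
Qed.

Lemma reorg (g : 'I_N -> 'I_N -> C) (e : 'I_k -> nat) :
  \prod_j (\prod_a g a (sg j a)) ^+ e j =
  \prod_a \prod_i g a i ^+ (\sum_j e j * (sg j a == i))%N.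
Proof.
under eq_bigr => j _ do rewrite -prodrXl.
rewrite exchange_big /=; apply: eq_bigr => a _.
under [RHS]eq_bigr => i _ do rewrite -prodrXr.
rewrite [RHS]exchange_big /=; apply: eq_bigr => j _.
rewrite (bigD1 (sg j a)) //= eqxx muln1 big1 ?mulr1 // => i ne.
by rewrite eq_sym (negbTE ne) muln0 expr0.
Qed.

Lemma q_vanish_img mu : qpoly.@[fun j => moment_param mu (vofperm (sg j))] = 0.
Proof.
pose g (a i : 'I_N) : C := if val i == 0%N then 1 else mu a (val i).
rewrite mevalB !mevalX.
have E e : \prod_j moment_param mu (vofperm (sg j)) ^+ e j = \prod_j (\prod_a g a (sg j a)) ^+ e j.
  by apply: eq_bigr => j _; rewrite momentE.
rewrite (E (fun j => mP j)) (E (fun j => mN j)) !reorg.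
apply/eqP; rewrite subr_eq0; apply/eqP; apply: eq_bigr => a _; apply: eq_bigr => i _.
case: (boolP (val i == 0%N)) => [i0|i0]; first by rewrite /g i0 !expr1n.
congr (_ ^+ _); apply/eqP; rewrite -eqz_nat.
rewrite !(big_morph Posz PoszD erefl).
have i0' : i != ord0 by apply: contra i0 => /eqP ->.
have h := sum_all a i0'.
rewrite -subr_eq0 -sumrB; apply/eqP; rewrite -[RHS]h; apply: eq_bigr => j _.
by rewrite !PoszM !mnmE -mulrBl -cint_split.
Qed.

End PartD2.

Section PartD2b.
Variable C : closedFieldType.
Variable m : nat.
Local Notation N := m.+2.
Local Notation K := m.+1.
Local Notation lam := (staircase N).
Local Notation NC := (Ncoord N lam).

Lemma upper_bound k (s : 'I_k -> NC) :
  alg_indep_coords (@moment_variety C N lam) s -> (k <= (K ^ 2).+1)%N.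
Proof.
move=> hs; rewrite leqNgt; apply/negP => hk.
have [u [unz hu]] := kernel_vec (fun j => permof (s j)) hk.
have := q_nz unz C; apply/negP; rewrite negbK; apply/eqP.
apply: hs => x hx.
pose Q := qpoly u C \mPo [tuple ('X_(enum_rank (s j)) : {mpoly C[#|NC|]}) | j < k].
have QE y : Q.@[fun i => y (enum_val i)] = (qpoly u C).@[fun j => y (s j)].
  rewrite comp_mpoly_meval; apply: meval_eq => j.
  by rewrite tnth_mktuple mevalXU enum_rankK.
rewrite -QE; apply: hx => z [mu hz]; rewrite /vanish QE.
rewrite -(q_vanish_img hu mu); apply: meval_eq => j.
by rewrite hz vofpermK.
Qed.
End PartD2b.

End MPD2.
Import MPD2.

Unset Implicit Arguments.

Theorem proposition2p4 (C : closedFieldType) (hC : [pchar C]%R =i pred0)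
  (n : nat) (hn : (2 <= n)%N) :
  let lam := staircase n in
  (* the coordinates of M_{n,lam} are exactly the permutations of {0,..,n-1} *)
  (forall s : 'S_n, exists v : Ncoord n lam, forall k, Nentry v k = s k) /\
  (forall v : Ncoord n lam, exists! s : 'S_n, forall k, Nentry v k = s k) /\
  (* hence the ambient space is P^{n!-1} *)
  #|Ncoord n lam| = n`! /\
  (* under m_{i_1..i_n} <-> permutation matrix with 1 in position (k, i_k+1),
     M_{n,lam} is the toric variety of B_n *)
  (forall (x : Ncoord n lam -> C) (y : 'S_n -> C),
     (forall (s : 'S_n) (v : Ncoord n lam), (forall k, Nentry v k = s k) -> y s = x v) ->
     (moment_variety x <-> birkhoff_toric y)) /\
  (* and it has (projective) dimension (n-1)^2 *)
  proj_dim (@moment_variety C n lam) ((n - 1) ^ 2).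
Proof.
case: n hn => [|[|m]] // _ lam; rewrite {}/lam.
split.
  by move=> s; exists (vofperm s) => k; rewrite vofpermE.
split.
  move=> v; exists (permof v); split; first by move=> k; rewrite permofE.
  by move=> s h; apply/permP => k; apply/val_inj; rewrite permofE h.
split; first exact: card_NC.
split.
  move=> x y h; split.
    by apply: dir1 => s; apply: h => k; rewrite vofpermE.
  apply: (dir2 hC) => v; symmetry; apply: h => k; by rewrite permofE.
rewrite /proj_dim subSS subn0; split.
  exact: indep_exists hC m.
exact: upper_bound.
Qed.
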